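(* Let $X$ be a finite set with $|X|=n$, $0\notin X$, $W=X\cup\{0\}$. Let $\mathfrak{V}$ be a $\big(\binom{n}{2}_{\,n-2}\ \binom{n}{3}_{\,3}\big)$-configuration whose point set is $\mathcal{P}_2(X)$, and let $\mathfrak{M}$ be the structure with point set $\mathcal{P}_2(W)$ whose lines are the lines of $\mathfrak{V}$ together with all sets $\{\{0,x\},\{0,y\},\{x,y\}\}$ for distinct $x,y\in X$. Let $H$ be a hyperplane of $\mathfrak{M}$. On $X$ define $x\sim y$ iff $x=y$, or $x\neq y$ and $\{x,y\}\in H$. Then $\sim$ is an equivalence relation on $X$.
   Context: $\mathcal{P}_2(Y)$ denotes the set of $2$-element subsets of $Y$. A $(v_r\ b_k)$-configuration is a partial linear space with $v$ points and $b$ lines, each point on exactly $r$ lines and each line containing exactly $k$ points. A subspace is a set of points containing every line that meets it in at least two points; a hyperplane is a proper subspace meeting every line. *)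

(* Defs.v *)
From mathcomp Require Import all_boot.
Set Implicit Arguments. Unset Strict Implicit. Unset Printing Implicit Defensive.

Definition P2 (Y : finType) : {set {set Y}} := [set A : {set Y} | #|A| == 2].

Definition partial_linear_space (Pt : finType) (P : {set Pt}) (L : {set {set Pt}}) : Prop :=
  (forall l, l \in L -> l \subset P) /\
  (forall l, l \in L -> 2 <= #|l|) /\
  (forall l1 l2 p q, l1 \in L -> l2 \in L -> p != q ->
      p \in l1 -> q \in l1 -> p \in l2 -> q \in l2 -> l1 = l2).

Definition configuration (v r b k : nat) (Pt : finType) (P : {set Pt}) (L : {set {set Pt}}) : Prop :=
  [/\ partial_linear_space P L, #|P| = v, #|L| = b,
      (forall p, p \in P -> #|[set l in L | p \in l]| = r) &
      (forall l, l \in L -> #|l| = k)].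

Definition subspace (Pt : finType) (P : {set Pt}) (L : {set {set Pt}}) (S : {set Pt}) : Prop :=
  S \subset P /\ (forall l, l \in L -> 2 <= #|l :&: S| -> l \subset S).

Definition hyperplane (Pt : finType) (P : {set Pt}) (L : {set {set Pt}}) (H : {set Pt}) : Prop :=
  [/\ subspace P L H, H != P & (forall l, l \in L -> l :&: H != set0)].

(* W = X ∪ {0} is modelled as option X, with 0 = None and x ∈ X as Some x. *)
Definition liftpt (X : finType) (A : {set X}) : {set option X} := Some @: A.

Definition M_lines (X : finType) (LV : {set {set {set X}}}) : {set {set {set option X}}} :=
  [set [set liftpt p | p in l] | l : {set {set X}} in LV] :|:
  [set [set [set None; Some xy.1]; [set None; Some xy.2]; [set Some xy.1; Some xy.2]]
     | xy : X * X & xy.1 != xy.2].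

Definition simH (X : finType) (H : {set {set option X}}) (x y : X) : bool :=
  (x == y) || ((x != y) && ([set Some x; Some y] \in H)).

(* Main.v *)
Require Import Defs.
From mathcomp Require Import all_boot.

Section Aux.
Variable X : finType.
Variable LV : {set {set {set X}}}.
Variable H : {set {set option X}}.

Definition aa (x : X) : {set option X} := [set None; Some x].
Definition ee (x y : X) : {set option X} := [set Some x; Some y].

Lemma line_in x y : x != y ->
  [set aa x; aa y; ee x y] \in M_lines LV.
Proof.
move=> nxy; rewrite /M_lines; apply/setUP; right.
by apply/imsetP; exists (x, y) => //; rewrite inE.
Qed.

Lemma aa_inj x y : x != y -> aa x != aa y.
Proof.
move=> nxy; apply/negP => /eqP E.
have : Some y \in aa x by rewrite E !inE eqxx orbT.
rewrite !inE /=.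
by move/eqP => [] E2; rewrite E2 eqxx in nxy.
Qed.

Lemma aa_ee x y z : aa x != ee y z.
Proof.
apply/negP => /eqP E.
have : None \in ee y z by rewrite -E !inE eqxx.
by rewrite !inE.
Qed.

Lemma close l p q r : subspace (P2 (option X)) (M_lines LV) H ->
  l \in M_lines LV -> p != q -> p \in l -> q \in l -> r \in l ->
  p \in H -> q \in H -> r \in H.
Proof.
move=> [_ HS] hl npq pl ql rl pH qH.
have : l \subset H.
  apply: HS => //.
  have -> : 2 = #|[set p; q]| by rewrite cards2 npq.
  apply: subset_leq_card; apply/subsetP => u; rewrite !inE.
  by case/orP => /eqP ->; rewrite ?pl ?ql ?pH ?qH.
by move/subsetP; apply.
Qed.

End Aux.
Arguments aa {X}.
Arguments ee {X}.

Theorem lemma3p1 (X : finType) (n : nat) (LV : {set {set {set X}}})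
    (H : {set {set option X}}) :
  #|X| = n ->
  configuration 'C(n, 2) (n - 2) 'C(n, 3) 3 (P2 X) LV ->
  hyperplane (P2 (option X)) (M_lines LV) H ->
  [/\ reflexive (simH H), symmetric (simH H) & transitive (simH H)].
Proof.
move=> _ _ [HS _ Hmeet].
split.
- by move=> x; rewrite /simH eqxx.
- by move=> x y; rewrite /simH eq_sym (setUC [set Some x]).
move=> y x z; rewrite /simH.
case: (eqVneq x y) => [-> //|nxy] /=.
case: (eqVneq y z) => [<-|nyz] /=; first by move=> h _; rewrite nxy h orbT.
move=> exy eyz.
case: (eqVneq x z) => [//|nxz] /=.
have Lxy := @line_in X LV _ _ nxy; have Lyz := @line_in X LV _ _ nyz; have Lxz := @line_in X LV _ _ nxz.
have m := fun l a b c => @close X LV H l a b c HS.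
case: (boolP (aa y \in H)) => ayH.
- have axH : aa x \in H.
    by apply: (m _ (aa y) (ee x y) _ Lxy (@aa_ee X _ _ _)); rewrite ?inE ?eqxx ?orbT.
  have azH : aa z \in H.
    apply: (m _ (aa y) (ee y z) _ Lyz (@aa_ee X _ _ _)); rewrite ?inE ?eqxx ?orbT //.
  by apply: (m _ (aa x) (aa z) _ Lxz (@aa_inj X _ _ nxz)); rewrite ?inE ?eqxx ?orbT.
- have axH : aa x \notin H.
    apply/negP => axH; move/negP: ayH; apply.
    by apply: (m _ (aa x) (ee x y) _ Lxy (@aa_ee X _ _ _)); rewrite ?inE ?eqxx ?orbT.
  have azH : aa z \notin H.
    apply/negP => azH; move/negP: ayH; apply.
    by apply: (m _ (aa z) (ee y z) _ Lyz (@aa_ee X _ _ _)); rewrite ?inE ?eqxx ?orbT.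
  have := Hmeet _ Lxz; case/set0Pn => u; rewrite !inE -orbA.
  case/andP => /or3P [] /eqP -> // ; by rewrite ?(negbTE axH) ?(negbTE azH).
Qed.
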